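(* For a $*$-ring $R$ the following are equivalent: (1) $R$ is $*$-clean and $0,1$ are its only projections; (2) $R$ is clean and $0,1$ are its only idempotents; (3) $R$ is a local ring.
   Context: A $*$-ring is a ring with identity with an involution $*$. A projection is $p$ with $p^2=p=p^*$. $R$ is clean if every element is a sum of an idempotent and a unit; $*$-clean if every element is a sum of a projection and a unit. *)

(* Defs.v *)
From HB Require Import structures.
From mathcomp Require Import all_boot all_order all_algebra.
Set Implicit Arguments. Unset Strict Implicit. Unset Printing Implicit Defensive.
Import GRing.Theory.
Local Open Scope ring_scope.

Definition involution (R : nzRingType) (star : R -> R) : Prop :=
  [/\ forall x y : R, star (x + y) = star x + star y,
      forall x y : R, star (x * y) = star y * star x
    & forall x : R, star (star x) = x].

Definition is_unit (R : nzRingType) (u : R) : Prop :=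
  exists v : R, u * v = 1 /\ v * u = 1.

Definition idempotent (R : nzRingType) (e : R) : Prop := e * e = e.

Definition projection (R : nzRingType) (star : R -> R) (p : R) : Prop :=
  p * p = p /\ star p = p.

Definition clean (R : nzRingType) : Prop :=
  forall x : R, exists e u : R, idempotent e /\ is_unit u /\ x = e + u.

Definition star_clean (R : nzRingType) (star : R -> R) : Prop :=
  forall x : R, exists p u : R, projection star p /\ is_unit u /\ x = p + u.

Definition only_trivial_idempotents (R : nzRingType) : Prop :=
  forall e : R, idempotent e -> e = 0 \/ e = 1.

Definition only_trivial_projections (R : nzRingType) (star : R -> R) : Prop :=
  forall p : R, projection star p -> p = 0 \/ p = 1.

Definition left_ideal (R : nzRingType) (I : R -> Prop) : Prop :=
  [/\ I 0, (forall x y, I x -> I y -> I (x + y)) & (forall r x, I x -> I (r * x))].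

Definition maximal_left_ideal (R : nzRingType) (I : R -> Prop) : Prop :=
  [/\ left_ideal I, ~ I 1 &
      forall J : R -> Prop, left_ideal J -> ~ J 1 -> (forall x, I x -> J x) ->
        forall x, J x -> I x].

Definition local_ring (R : nzRingType) : Prop :=
  exists I : R -> Prop, maximal_left_ideal I /\
    forall J : R -> Prop, maximal_left_ideal J -> forall x, J x <-> I x.

(* Main.v *)
Require Import Defs.
From mathcomp Require Import all_boot all_order all_algebra.
From mathcomp Require Import boolp classical_sets.
Set Implicit Arguments. Unset Strict Implicit. Unset Printing Implicit Defensive.
Import GRing.Theory.
Local Open Scope ring_scope.

Section S.
Variable R : nzRingType.

Definition PU := forall x : R, is_unit x \/ is_unit (1 - x).

Lemma unit_idem (e : R) : is_unit e -> Defs.idempotent e -> e = 1.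
Proof. by move=> [v [ev ve]] ee; rewrite -[LHS]mulr1 -ev mulrA ee. Qed.

Lemma unit1_idem (e : R) : is_unit (1 - e) -> Defs.idempotent e -> e = 0.
Proof.
move=> [v [ev ve]] ee.
by rewrite -[e]mulr1 -ev mulrA mulrBr mulr1 ee subrr mul0r.
Qed.

Lemma PU_clean : PU -> clean R /\ only_trivial_idempotents R.
Proof.
move=> P; split.
  move=> x; case: (P x) => [ux|[v [ev ve]]].
    by exists 0, x; split; [rewrite /Defs.idempotent mul0r|split=> //; rewrite add0r].
  exists 1, (x - 1); split; first by rewrite /Defs.idempotent mul1r.
  split; last by rewrite addrC subrK.
  exists (- v); split.
    by rewrite mulrN -mulNr opprB.
  by rewrite mulNr -mulrN opprB.
move=> e ee; case: (P e) => h.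
  by right; apply: unit_idem.
by left; apply: unit1_idem.
Qed.

Lemma unit1 : is_unit (1 : R). Proof. by exists 1; rewrite mulr1. Qed.

Lemma clean_PU : clean R /\ only_trivial_idempotents R -> PU.
Proof.
move=> [C T] x; have [e [u [ee [uu ->]]]] := C x.
case: (T e ee) => ->; first by left; rewrite add0r.
right; case: uu => v [uv vu]; exists (- v).
by rewrite opprD addrA subrr add0r mulrNN mulNr mulrN opprK.
Qed.

Lemma not_unit0 : ~ is_unit (0 : R).
Proof. by move=> [v [h _]]; move: h; rewrite mul0r => /esym/eqP; rewrite oner_eq0. Qed.

Lemma PU_local : PU -> local_ring R.
Proof.
move=> P; have [_ T] := PU_clean P.
have oneside : forall a b : R, a * b = 1 -> b * a = 1.
  move=> a b ab.
  have : Defs.idempotent (b * a) by rewrite /Defs.idempotent mulrA -(mulrA b) ab mulr1.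
  move/T => [ba0|//].
  have e1 : (1:R) = a * (b * a) * b by rewrite mulrA ab mul1r ab.
  by move: (oner_neq0 R); rewrite e1 ba0 mulr0 mul0r eqxx.
have leftinv : forall r x : R, is_unit (r * x) -> is_unit x.
  move=> r x [v [h1 h2]]; exists (v * r); split; last by rewrite -mulrA.
  by apply: oneside; rewrite -mulrA.
pose J := fun x : R => ~ is_unit x.
have JI : left_ideal J.
  split.
  - exact: not_unit0.
  - move=> x y Jx Jy [w [h1 h2]].
    have : w * (x + y) = 1 by apply: oneside.
    rewrite mulrDr => h.
    have wxJ : ~ is_unit (w * x) by move/leftinv.
    case: (P (w * x)) => // hu; apply: Jy; apply: (leftinv w).
    by move: hu; rewrite -h (addrC (w * x)) addrK.
  - by move=> r x Jx /leftinv.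
have J1 : ~ J 1 by move=> h; apply: h; exact: unit1.
have sub : forall K : R -> Prop, left_ideal K -> ~ K 1 -> forall x, K x -> J x.
  move=> K [_ _ KM] K1 x Kx [v [xv vx]]; apply: K1; rewrite -vx; exact: KM.
have MJ : maximal_left_ideal J by split=> // K KI K1 _; exact: sub.
exists J; split=> // K [KI K1 KM] x; split; first exact: sub.
by apply: (KM J JI J1 (sub K KI K1)).
Qed.

Lemma extend (I K : R -> Prop) :
  (forall J : R -> Prop, maximal_left_ideal J -> forall x, J x <-> I x) ->
  left_ideal K -> ~ K 1 -> forall x, K x -> I x.
Proof.
move=> U [K0 KD KM] K1.
pose Q := fun X : set R => [/\ ~ X 1, (forall x y, X x -> X y -> X (x + y)),
   (forall r x, X x -> X (r * x)) & ((exists z, X z) -> forall x, K x -> X x)].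
have := @Zorn_bigcup R Q.
case.
  move=> F FQ Ftot; split.
  - by case=> X FX X1; case: (FQ X FX).
  - move=> x y [X FX Xx] [Y FY Yy].
    case: (Ftot X Y FX FY) => XY.
      by exists Y => //; case: (FQ Y FY) => _ h _ _; apply: h => //; apply: XY.
    by exists X => //; case: (FQ X FX) => _ h _ _; apply: h => //; apply: XY.
  - move=> r x [X FX Xx]; exists X => //; by case: (FQ X FX) => _ _ h _; apply: h.
  - move=> [z [X FX Xz]] x Kx; exists X => //.
    by case: (FQ X FX) => _ _ _ h; apply: h => //; exists z.
move=> A [[A1 AD AM AK] Amax].
have Ane : exists z, A z.
  apply: contrapT => hne; apply: (Amax K); last by split.
  split; first by move=> z Az; exfalso; apply: hne; exists z.
  by move=> h; apply: hne; exists 0; apply: h.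
have KA := AK Ane.
have AI : left_ideal A by split=> //; rewrite -(mul0r 0); apply: AM; apply: KA.
have AMx : maximal_left_ideal A.
  split=> // J [J0 JD JM] J1 AJ x Jx; apply: contrapT => nAx.
  apply: (Amax J); last by split=> // _ y Ky; apply: AJ; apply: KA.
  split; first exact: AJ.
  by move=> h; apply: nAx; apply: h.
by move=> x Kx; apply/(U A AMx)/KA.
Qed.

Lemma local_PU : local_ring R -> PU.
Proof.
move=> [I [[[I0 ID IM] I1 _] U]].
have ext := extend U.
have linv : forall x, ~ I x -> exists y, y * x = 1.
  move=> x nIx; apply: contrapT => ninv; apply: nIx.
  apply: (ext (fun z => exists r, z = r * x)) ; last by exists 1; rewrite mul1r.
    split; first by exists 0; rewrite mul0r.
      by move=> a b [r ->] [s ->]; exists (r + s); rewrite mulrDl.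
    by move=> s a [r ->]; exists (s * r); rewrite mulrA.
  by move=> [r h]; apply: ninv; exists r.
have uni : forall x, ~ I x -> is_unit x.
  move=> x nIx; have [y yx] := linv x nIx.
  have nIy : ~ I y.
    move=> Iy; have Ie : I (x * y) by apply: IM.
    have n1e : ~ I (1 - x * y).
      by move=> h; apply: I1; rewrite -(subrK (x * y) 1); apply: ID.
    have [z ze] := linv _ n1e.
    have e0 : x * y = 0.
      rewrite -[x * y]mul1r -ze -mulrA mulrBl mul1r -mulrA (mulrA y) yx mul1r.
      by rewrite subrr mulr0.
    move: (oner_neq0 R); rewrite -yx -[y * x]mul1r -yx -mulrA (mulrA x) e0.
    by rewrite mul0r mulr0 eqxx.
  have [z zy] := linv y nIy.
  have zx : z = x by rewrite -[z]mulr1 -yx mulrA zy mul1r.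
  by exists y; split => //; rewrite -zx.
move=> x; case: (pselect (I x)) => Ix; last by left; apply: uni.
right; apply: uni => h; apply: I1.
by rewrite -(subrK x 1); apply: ID.
Qed.

End S.

Theorem proposition2p6 (R : nzRingType) (star : R -> R) (hstar : involution star) :
  ((star_clean star /\ only_trivial_projections star) <->
     (clean R /\ only_trivial_idempotents R)) /\
  ((clean R /\ only_trivial_idempotents R) <-> local_ring R).
Proof.
case: hstar => sD sM ss.
have s0 : star 0 = 0.
  by apply: (addrI (star 0)); rewrite addr0 -sD addr0.
have s1 : star 1 = 1.
  by have := sM (star 1) 1; rewrite !mulr1 ss mulr1.
split; last first.
  split; first by move=> h; apply: PU_local; apply: clean_PU.
  by move=> h; apply: PU_clean; apply: local_PU.
split.
  move=> [C T]; apply: PU_clean => x.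
  have [p [u [pp [uu ->]]]] := C x.
  case: (T p pp) => ->; first by left; rewrite add0r.
  right; case: uu => v [uv vu]; exists (- v).
  by rewrite opprD addrA subrr add0r mulrNN mulNr mulrN opprK.
move=> h; have P := clean_PU h; have [_ T] := h; split.
  move=> x; case: (P x) => [ux|[v [ev ve]]].
    by exists 0, x; split; [split; [rewrite mul0r|]|split=> //; rewrite add0r].
  exists 1, (x - 1); split; first by split; [rewrite mul1r|].
  split; last by rewrite addrC subrK.
  exists (- v); split.
    by rewrite mulrN -mulNr opprB.
  by rewrite mulNr -mulrN opprB.
by move=> p [pp _]; apply: T.
Qed.
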